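(* Let $b>a>0$, $c>0$, $u_L<0$, $\bar\Delta_H,\bar\Delta_L>0$, $L_0>0$, and $L_t=L_0e^{(b-a)t}$. The integro-differential equation $$\rho'(t)=\frac{b(-u_L)-c-L_tc+b\bar\Delta_L\int_0^te^{-bs}\rho'(s)\,ds-L_t\bar\Delta_Hae^{-at}(1-\rho(t))}{L_t\bar\Delta_He^{-at}+\bar\Delta_Le^{-bt}}$$ with initial condition $\rho(0)=0$ has a unique (continuously differentiable) solution defined for all $t\in[0,\infty)$.
   Context: Here $L_0=\frac{p_0}{1-p_0}$ is the prior likelihood ratio of state $H$; the equation expresses that a player is indifferent between taking $R$ now and continuing to acquire information when the opponent stops with $R$ according to $\rho$. *)

(* Defs.v *)
From Stdlib Require Import Reals.
From Coquelicot Require Import Coquelicot.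
Open Scope R_scope.

Definition Lt (a b L0 t : R) : R := L0 * exp ((b - a) * t).

Definition rhs (a b c uL DH DL L0 : R) (rho drho : R -> R) (t : R) : R :=
  (b * (- uL) - c - Lt a b L0 t * c
   + b * DL * RInt (fun s => exp (- b * s) * drho s) 0 t
   - Lt a b L0 t * DH * a * exp (- a * t) * (1 - rho t))
  / (Lt a b L0 t * DH * exp (- a * t) + DL * exp (- b * t)).

Definition C1_halfline (rho drho : R -> R) : Prop :=
  (forall t, 0 < t -> is_derive rho t (drho t)) /\
  filterlim (fun h => (rho h - rho 0) / h) (at_right 0) (locally (drho 0)) /\
  (forall t, 0 < t -> continuous drho t) /\
  filterlim drho (at_right 0) (locally (drho 0)).

Definition is_solution (a b c uL DH DL L0 : R) (rho drho : R -> R) : Prop :=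
  C1_halfline rho drho /\ rho 0 = 0 /\
  (forall t, 0 <= t -> drho t = rhs a b c uL DH DL L0 rho drho t).

(* Main.v *)
Require Import Defs.
From Stdlib Require Import Reals Lra Lia Psatz Ranalysis5 PSeries_reg.
From Coquelicot Require Import Coquelicot.
Open Scope R_scope.

Lemma RInt_deriv (f : R -> R) (t : R) :
  (forall s, continuous f s) -> is_derive (fun u => RInt f 0 u) t (f t).
Proof.
  intros Hf. apply is_derive_RInt with (a := 0).
  - apply filter_forall. intros u. apply RInt_correct, ex_RInt_continuous.
    intros; apply Hf.
  - apply Hf.
Qed.

Lemma RInt_cont (f : R -> R) (t : R) :
  (forall s, continuous f s) -> continuous (fun u => RInt f 0 u) t.
Proof.
  intros Hf. apply (ex_derive_continuous (K:=R_AbsRing) (V:=R_NormedModule)). eexists. apply RInt_deriv; auto.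
Qed.

Lemma exRI (f : R -> R) (u v : R) :
  (forall s, continuous f s) -> ex_RInt f u v.
Proof. intros H. apply (ex_RInt_continuous (V:=R_CompleteNormedModule)). intros; apply H. Qed.

Lemma int_bound (F : R -> R) (K : R) (m : nat) (t : R) :
  (forall s, continuous F s) ->
  (forall s, Rabs s <= Rabs t -> Rabs (F s) <= K * Rabs s ^ m) ->
  Rabs (RInt F 0 t) <= K * Rabs t ^ (S m) / INR (S m).
Proof.
  intros Hc Hb.
  assert (HS : INR (S m) <> 0) by (apply not_0_INR; lia).
  assert (exF : forall u v, ex_RInt F u v).
  { intros; apply exRI; auto. }
  assert (exA : forall u v, ex_RInt (fun s => Rabs (F s)) u v).
  { intros; apply exRI; intros; apply continuous_Rabs_comp, Hc. }
  destruct (Rle_or_lt 0 t) as [Ht|Ht].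
  - eapply Rle_trans. apply abs_RInt_le; auto.
    assert (E : is_RInt (fun s => K * s ^ m) 0 t (K * t ^ S m / INR (S m))).
    { assert (E1 := is_RInt_derive (V:=R_CompleteNormedModule)
        (fun s => K * s ^ S m / INR (S m)) (fun s => K * s ^ m) 0 t).
      replace (K * t ^ S m / INR (S m)) with
        (minus ((fun s => K * s ^ S m / INR (S m)) t) ((fun s => K * s ^ S m / INR (S m)) 0)).
      2:{ unfold minus, plus, opp; simpl. field. auto. }
      apply E1.
      + intro; intros _. auto_derive; [auto|]. change (match m with 0%nat => 1 | S _ => INR m + 1 end) with (INR (S m)). field. auto.
      + intro; intros _. apply (ex_derive_continuous (K:=R_AbsRing) (V:=R_NormedModule)). auto_derive. auto. }
    rewrite Rabs_right by lra.
    rewrite <- (is_RInt_unique _ _ _ _ E).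
    apply RInt_le; auto.
    + eexists; eauto.
    + intros x Hx. specialize (Hb x). rewrite (Rabs_right x) in Hb by lra.
      apply Hb. rewrite Rabs_right; lra.
  - rewrite <- opp_RInt_swap by auto. unfold opp; simpl. rewrite Rabs_Ropp.
    eapply Rle_trans. apply abs_RInt_le; auto; lra.
    assert (E : is_RInt (fun s => K * (- s) ^ m) t 0 (K * (- t) ^ S m / INR (S m))).
    { assert (E1 := is_RInt_derive (V:=R_CompleteNormedModule)
        (fun s => - (K * (- s) ^ S m / INR (S m))) (fun s => K * (- s) ^ m) t 0).
      replace (K * (- t) ^ S m / INR (S m)) with
        (minus ((fun s => - (K * (- s) ^ S m / INR (S m))) 0) ((fun s => - (K * (- s) ^ S m / INR (S m))) t)).
      2:{ unfold minus, plus, opp; simpl. replace (-0) with 0 by ring. field. auto. }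
      apply E1.
      + intro; intros _. auto_derive; [auto|]. change (match m with 0%nat => 1 | S _ => INR m + 1 end) with (INR (S m)). field. auto.
      + intro; intros _. apply (ex_derive_continuous (K:=R_AbsRing) (V:=R_NormedModule)). auto_derive. auto. }
    rewrite Rabs_left by lra.
    apply Rle_trans with (K * (- t) ^ S m / INR (S m)); [| right; reflexivity].
    rewrite <- (is_RInt_unique _ _ _ _ E).
    apply RInt_le; auto; try lra.
    + eexists; eauto.
    + intros x Hx. specialize (Hb x). rewrite (Rabs_left x) in Hb by lra.
      apply Hb. rewrite (Rabs_left t); lra.
Qed.

Lemma exs_le (a b : nat -> R) : (forall k, Rabs (a k) <= b k) -> ex_series b -> ex_series a.
Proof. intros H Hb. apply (ex_series_le (K:=R_AbsRing) (V:=R_CompleteNormedModule) a b); auto. Qed.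

Lemma tail_bound (a b : nat -> R) (n : nat) :
  (forall k, Rabs (a k) <= b k) -> ex_series b ->
  Rabs (Series a - sum_f_R0 a n) <= Series b - sum_f_R0 b n.
Proof.
  intros H Hb.
  assert (Ha : ex_series a) by (eapply exs_le; eauto).
  rewrite (Series_incr_n a (S n)) by (auto; lia).
  rewrite (Series_incr_n b (S n)) by (auto; lia).
  simpl pred.
  replace (sum_f_R0 a n + Series (fun k => a (S n + k)%nat) - sum_f_R0 a n)
    with (Series (fun k => a (S n + k)%nat)) by ring.
  replace (sum_f_R0 b n + Series (fun k => b (S n + k)%nat) - sum_f_R0 b n)
    with (Series (fun k => b (S n + k)%nat)) by ring.
  assert (Hbs : ex_series (fun k => b (S n + k)%nat)).
  { apply (ex_series_incr_n (K:=R_AbsRing) (V:=R_NormedModule) b (S n)). auto. }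
  eapply Rle_trans. apply Series_Rabs.
  - eapply exs_le; [|exact Hbs]. intros k. rewrite Rabs_Rabsolu. apply H.
  - apply Series_le; auto. intros k; split; [apply Rabs_pos| apply H].
Qed.

Lemma series_tail_cv (b : nat -> R) : ex_series b ->
  forall eps, 0 < eps -> exists N, forall n, (N <= n)%nat -> Series b - sum_f_R0 b n < eps.
Proof.
  intros Hb eps He.
  assert (H := Series_correct _ Hb). apply is_series_Reals in H.
  destruct (H eps He) as [N HN]. exists N. intros n Hn.
  specialize (HN n Hn). unfold R_dist in HN. apply Rabs_def2 in HN. lra.
Qed.

Lemma telescope (u : nat -> R) (n : nat) :
  sum_f_R0 (fun k => u (S k) - u k) n = u (S n) - u O.
Proof. induction n; simpl; [ring| rewrite IHn; ring]. Qed.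

Lemma cvu_gen (u : nat -> R -> R) (beta : nat -> R) (T : posreal) :
  ex_series beta ->
  (forall n y, Rabs y <= T -> Rabs (u (S n) y - u n y) <= beta n) ->
  (forall y, u O y = 0) ->
  CVU (fun n => u (S n)) (fun y => Series (fun n => u (S n) y - u n y)) 0 T.
Proof.
  intros Hb Hu H0 eps He.
  destruct (series_tail_cv beta Hb eps He) as [N HN].
  exists N. intros n y Hn Hy. unfold Boule in Hy. rewrite Rminus_0_r in Hy.
  eapply Rle_lt_trans; [|apply (HN n Hn)].
  replace (u (S n) y) with (sum_f_R0 (fun k => u (S k) y - u k y) n)
    by (rewrite (telescope (fun k => u k y)), H0; ring).
  apply tail_bound; auto. intros k; apply Hu; lra.
Qed.

Lemma cont_plus (f g : R -> R) t : continuous f t -> continuous g t -> continuous (fun s => f s + g s) t.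
Proof. intros; apply (continuous_plus (V:=R_NormedModule) f g); auto. Qed.
Lemma cont_mult (f g : R -> R) t : continuous f t -> continuous g t -> continuous (fun s => f s * g s) t.
Proof. intros; apply (continuous_mult (K:=R_AbsRing) f g); auto. Qed.

Lemma cont_minus (f g : R -> R) t : continuous f t -> continuous g t -> continuous (fun s => f s - g s) t.
Proof. intros; apply (continuous_minus (V:=R_NormedModule) f g); auto. Qed.

Lemma cont_lin (a1 a2 g x y : R -> R) t :
  continuous a1 t -> continuous a2 t -> continuous g t -> continuous x t -> continuous y t ->
  continuous (fun s => a1 s * x s + a2 s * y s + g s) t.
Proof. intros. apply cont_plus; auto. apply cont_plus; apply cont_mult; auto. Qed.

Definition stepf (a1 a2 g x y : R -> R) : R -> R :=
  fun t => RInt (fun s => a1 s * x s + a2 s * y s + g s) 0 t.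

Fixpoint pic (a11 a12 a21 a22 g1 g2 : R -> R) (n : nat) : (R -> R) * (R -> R) :=
  match n with
  | O => (fun _ => 0, fun _ => 0)
  | S n => let p := pic a11 a12 a21 a22 g1 g2 n in
           (stepf a11 a12 g1 (fst p) (snd p), stepf a21 a22 g2 (fst p) (snd p))
  end.

Lemma pic_cont a11 a12 a21 a22 g1 g2 :
  (forall t, continuous a11 t) -> (forall t, continuous a12 t) ->
  (forall t, continuous a21 t) -> (forall t, continuous a22 t) ->
  (forall t, continuous g1 t) -> (forall t, continuous g2 t) ->
  forall n t, continuous (fst (pic a11 a12 a21 a22 g1 g2 n)) t /\
              continuous (snd (pic a11 a12 a21 a22 g1 g2 n)) t.
Proof.
  intros H1 H2 H3 H4 H5 H6 n. induction n as [|n IH]; intros t; simpl.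
  - split; apply continuous_const.
  - split; apply RInt_cont; intros s; apply cont_lin; auto; apply IH.
Qed.

Lemma pic_zero a11 a12 a21 a22 g1 g2 n :
  fst (pic a11 a12 a21 a22 g1 g2 n) 0 = 0 /\ snd (pic a11 a12 a21 a22 g1 g2 n) 0 = 0.
Proof. destruct n; simpl; unfold stepf; [split; reflexivity| rewrite !RInt_point; split; reflexivity]. Qed.

Lemma stepf_diff a1 a2 g x y x' y' t :
  (forall s, continuous a1 s) -> (forall s, continuous a2 s) -> (forall s, continuous g s) ->
  (forall s, continuous x s) -> (forall s, continuous y s) ->
  (forall s, continuous x' s) -> (forall s, continuous y' s) ->
  stepf a1 a2 g x y t - stepf a1 a2 g x' y' t =
  RInt (fun s => a1 s * (x s - x' s) + a2 s * (y s - y' s)) 0 t.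
Proof.
  intros. unfold stepf.
  transitivity (minus (RInt (fun s => a1 s * x s + a2 s * y s + g s) 0 t)
                      (RInt (fun s => a1 s * x' s + a2 s * y' s + g s) 0 t)); [reflexivity|].
  rewrite <- (RInt_minus (V:=R_CompleteNormedModule)) by (apply exRI; intros; apply cont_lin; auto).
  apply RInt_ext; intros; unfold minus, plus, opp; simpl; ring.
Qed.

Lemma pic_bound a11 a12 a21 a22 g1 g2 (T B : R) :
  (forall t, continuous a11 t) -> (forall t, continuous a12 t) ->
  (forall t, continuous a21 t) -> (forall t, continuous a22 t) ->
  (forall t, continuous g1 t) -> (forall t, continuous g2 t) ->
  0 <= B ->
  (forall s, Rabs s <= T -> Rabs (a11 s) <= B /\ Rabs (a12 s) <= B /\ Rabs (a21 s) <= B /\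
                           Rabs (a22 s) <= B /\ Rabs (g1 s) <= B /\ Rabs (g2 s) <= B) ->
  forall n t, Rabs t <= T ->
  Rabs (fst (pic a11 a12 a21 a22 g1 g2 (S n)) t - fst (pic a11 a12 a21 a22 g1 g2 n) t) +
  Rabs (snd (pic a11 a12 a21 a22 g1 g2 (S n)) t - snd (pic a11 a12 a21 a22 g1 g2 n) t)
  <= (2 * B) ^ (S n) * Rabs t ^ (S n) / INR (Factorial.fact (S n)).
Proof.
  intros H1 H2 H3 H4 H5 H6 HB Hb n.
  assert (PC := pic_cont _ _ _ _ _ _ H1 H2 H3 H4 H5 H6).
  induction n as [|n IH]; intros t Ht.
  - simpl fst; simpl snd. unfold stepf. rewrite !Rminus_0_r.
    assert (E1 := int_bound (fun s => a11 s * 0 + a12 s * 0 + g1 s) B 0 t).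
    assert (E2 := int_bound (fun s => a21 s * 0 + a22 s * 0 + g2 s) B 0 t).
    assert (HH : forall s, Rabs s <= Rabs t -> Rabs s <= T) by (intros; lra).
    simpl INR in *. simpl pow in *. simpl Factorial.fact. simpl INR.
    assert (A1 : Rabs (RInt (fun s => a11 s * 0 + a12 s * 0 + g1 s) 0 t) <= B * (Rabs t * 1) / 1).
    { apply E1. intros; apply cont_lin; auto; apply continuous_const.
      intros s Hs. destruct (Hb s (HH s Hs)) as (_&_&_&_&?&?). rewrite !Rmult_0_r, !Rplus_0_l. lra. }
    assert (A2 : Rabs (RInt (fun s => a21 s * 0 + a22 s * 0 + g2 s) 0 t) <= B * (Rabs t * 1) / 1).
    { apply E2. intros; apply cont_lin; auto; apply continuous_const.
      intros s Hs. destruct (Hb s (HH s Hs)) as (_&_&_&_&?&?). rewrite !Rmult_0_r, !Rplus_0_l. lra. }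
    lra.
  - change (fst (pic a11 a12 a21 a22 g1 g2 (S (S n))) t) with
      (stepf a11 a12 g1 (fst (pic a11 a12 a21 a22 g1 g2 (S n))) (snd (pic a11 a12 a21 a22 g1 g2 (S n))) t).
    change (snd (pic a11 a12 a21 a22 g1 g2 (S (S n))) t) with
      (stepf a21 a22 g2 (fst (pic a11 a12 a21 a22 g1 g2 (S n))) (snd (pic a11 a12 a21 a22 g1 g2 (S n))) t).
    change (fst (pic a11 a12 a21 a22 g1 g2 (S n)) t) with
      (stepf a11 a12 g1 (fst (pic a11 a12 a21 a22 g1 g2 n)) (snd (pic a11 a12 a21 a22 g1 g2 n)) t).
    change (snd (pic a11 a12 a21 a22 g1 g2 (S n)) t) with
      (stepf a21 a22 g2 (fst (pic a11 a12 a21 a22 g1 g2 n)) (snd (pic a11 a12 a21 a22 g1 g2 n)) t).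
    assert (PCf : forall m s, continuous (fst (pic a11 a12 a21 a22 g1 g2 m)) s) by (intros; apply PC).
    assert (PCs : forall m s, continuous (snd (pic a11 a12 a21 a22 g1 g2 m)) s) by (intros; apply PC).
    rewrite (stepf_diff a11 a12 g1 (fst (pic a11 a12 a21 a22 g1 g2 (S n))) (snd (pic a11 a12 a21 a22 g1 g2 (S n))) (fst (pic a11 a12 a21 a22 g1 g2 n)) (snd (pic a11 a12 a21 a22 g1 g2 n)) t); [| exact H1 | exact H2 | exact H5 | exact (PCf (S n)) | exact (PCs (S n)) | exact (PCf n) | exact (PCs n)].
    rewrite (stepf_diff a21 a22 g2 (fst (pic a11 a12 a21 a22 g1 g2 (S n))) (snd (pic a11 a12 a21 a22 g1 g2 (S n))) (fst (pic a11 a12 a21 a22 g1 g2 n)) (snd (pic a11 a12 a21 a22 g1 g2 n)) t); [| exact H3 | exact H4 | exact H6 | exact (PCf (S n)) | exact (PCs (S n)) | exact (PCf n) | exact (PCs n)].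
    set (X1 := fst (pic a11 a12 a21 a22 g1 g2 (S n))).
    set (X0 := fst (pic a11 a12 a21 a22 g1 g2 n)).
    set (Y1 := snd (pic a11 a12 a21 a22 g1 g2 (S n))).
    set (Y0 := snd (pic a11 a12 a21 a22 g1 g2 n)).
    set (K := B * ((2 * B) ^ S n / INR (Factorial.fact (S n)))).
    assert (HH : forall s, Rabs s <= Rabs t -> Rabs s <= T) by (intros; lra).
    assert (Hint : forall c1 c2, (forall s, continuous c1 s) -> (forall s, continuous c2 s) ->
              (forall s, Rabs s <= T -> Rabs (c1 s) <= B /\ Rabs (c2 s) <= B) ->
              Rabs (RInt (fun s => c1 s * (X1 s - X0 s) + c2 s * (Y1 s - Y0 s)) 0 t)
              <= K * Rabs t ^ S (S n) / INR (S (S n))).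
    { intros c1 c2 Hc1 Hc2 Hcb. apply int_bound.
      - intros s. apply cont_plus; apply cont_mult;
          [apply Hc1 | apply cont_minus; apply PCf | apply Hc2 | apply cont_minus; apply PCs].
      - intros s Hs. destruct (Hcb s (HH s Hs)) as [Hc1b Hc2b].
        specialize (IH s (HH s Hs)). fold X1 X0 Y1 Y0 in IH.
        eapply Rle_trans. apply Rabs_triang. rewrite !Rabs_mult.
        apply Rle_trans with (B * (Rabs (X1 s - X0 s) + Rabs (Y1 s - Y0 s))).
        + assert (0 <= Rabs (X1 s - X0 s)) by apply Rabs_pos.
          assert (0 <= Rabs (Y1 s - Y0 s)) by apply Rabs_pos.
          rewrite Rmult_plus_distr_l. apply Rplus_le_compat; apply Rmult_le_compat_r; auto.
        + unfold K. replace (B * ((2 * B) ^ S n / INR (Factorial.fact (S n))) * Rabs s ^ S n)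
            with (B * ((2 * B) ^ S n * Rabs s ^ S n / INR (Factorial.fact (S n)))).
          2:{ field. apply INR_fact_neq_0. }
          apply Rmult_le_compat_l; auto. }
    assert (A1 := Hint a11 a12 H1 H2 ltac:(intros s Hs; destruct (Hb s Hs) as (?&?&?&?&?&?); split; assumption)).
    assert (A2 := Hint a21 a22 H3 H4 ltac:(intros s Hs; destruct (Hb s Hs) as (?&?&?&?&?&?); split; assumption)).
    apply Rle_trans with (2 * (K * Rabs t ^ S (S n) / INR (S (S n)))); [lra|].
    right. unfold K. rewrite (fact_simpl (S n)), mult_INR.
    assert (INR (S (S n)) <> 0) by (apply not_0_INR; lia).
    assert (INR (Factorial.fact (S n)) <> 0) by apply INR_fact_neq_0.
    change ((2 * B) ^ S (S n)) with ((2 * B) * (2 * B) ^ S n).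
    field; auto.
Qed.

Lemma cont_of_pt f x : continuity_pt f x -> continuous f x.
Proof. intros H; apply continuity_pt_filterlim; auto. Qed.
Lemma pt_of_cont f x : continuous f x -> continuity_pt f x.
Proof. intros H; apply continuity_pt_filterlim; auto. Qed.

Lemma comp_deriv (X Y Z : nat -> R -> R) (x y z a1 a2 g : R -> R) (T : posreal) (B : R) :
  (forall n, Z (S n) = stepf a1 a2 g (X n) (Y n)) ->
  (forall s, continuous a1 s) -> (forall s, continuous a2 s) -> (forall s, continuous g s) ->
  (forall n s, continuous (X n) s) -> (forall n s, continuous (Y n) s) ->
  CVU (fun n => X (S n)) x 0 T -> CVU (fun n => Y (S n)) y 0 T -> CVU (fun n => Z (S n)) z 0 T ->
  0 <= B ->
  (forall s, Boule 0 T s -> Rabs (a1 s) <= B /\ Rabs (a2 s) <= B) ->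
  forall t, Boule 0 T t -> derivable_pt_lim z t (a1 t * x t + a2 t * y t + g t).
Proof.
  intros HZ Ha1 Ha2 Hg HX HY CX CY CZ HB Hb t Ht.
  assert (Xc : forall s, Boule 0 T s -> continuous x s).
  { intros s Hs. apply cont_of_pt. apply (CVU_continuity _ _ 0 T CX); auto.
    intros; apply pt_of_cont; auto. }
  assert (Yc : forall s, Boule 0 T s -> continuous y s).
  { intros s Hs. apply cont_of_pt. apply (CVU_continuity _ _ 0 T CY); auto.
    intros; apply pt_of_cont; auto. }
  apply (derivable_pt_lim_CVU (fun n => Z (S n))
           (fun n s => a1 s * X n s + a2 s * Y n s + g s) z
           (fun s => a1 s * x s + a2 s * y s + g s) t 0 T Ht).
  - intros s n _. rewrite HZ. apply is_derive_Reals. unfold stepf.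
    apply (RInt_deriv (fun u => a1 u * X n u + a2 u * Y n u + g u)). intros u. apply cont_lin; auto.
  - intros s Hs. apply (CVU_cv _ _ _ _ CZ); auto.
  - intros eps He.
    set (e' := eps / (2 * (B + 1))).
    assert (He' : 0 < e') by (unfold e'; apply Rdiv_lt_0_compat; lra).
    destruct (CX e' He') as [N1 HN1]. destruct (CY e' He') as [N2 HN2].
    exists (S (Nat.max N1 N2)). intros n s Hn Hs.
    destruct n as [|m]; [lia|].
    specialize (HN1 m s ltac:(lia) Hs). specialize (HN2 m s ltac:(lia) Hs).
    destruct (Hb s Hs) as [Hb1 Hb2].
    replace (a1 s * x s + a2 s * y s + g s - (a1 s * X (S m) s + a2 s * Y (S m) s + g s))
      with (a1 s * (x s - X (S m) s) + a2 s * (y s - Y (S m) s)) by ring.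
    eapply Rle_lt_trans. apply Rabs_triang. rewrite !Rabs_mult.
    apply Rle_lt_trans with (B * e' + B * e').
    + apply Rplus_le_compat; apply Rmult_le_compat; auto using Rabs_pos; lra.
    + unfold e'. apply Rminus_gt_0_lt. field_simplify; [|lra]. apply Rdiv_lt_0_compat; lra.
  - intros s Hs. apply pt_of_cont. apply cont_lin; auto.
Qed.

Lemma abs_le_T (s T : R) : Rabs s <= T -> -T <= s <= T.
Proof. unfold Rabs; destruct Rcase_abs; intros; lra. Qed.
Lemma T_le_abs (s T : R) : -T <= s <= T -> Rabs s <= T.
Proof. unfold Rabs; destruct Rcase_abs; intros; lra. Qed.

Lemma exp_series_dom (q : R) : 0 <= q ->
  ex_series (fun n => q ^ S n / INR (Factorial.fact (S n))).
Proof.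
  intros Hq.
  assert (E : ex_series (fun n => q * (q ^ n / INR (Factorial.fact n)))).
  { assert (H := is_exp_Reals q).
    assert (H1 : ex_series (fun k => scal (pow_n q k) (/ INR (Factorial.fact k)))) by (eexists; exact H).
    apply (ex_series_scal (K:=R_AbsRing) (V:=R_NormedModule) q) in H1.
    eapply (ex_series_ext (K:=R_AbsRing) (V:=R_NormedModule)); [|exact H1].
    intros n. simpl. unfold scal; simpl; unfold mult; simpl. rewrite pow_n_pow. reflexivity. }
  eapply exs_le; [|exact E]. intros n.
  assert (F0 := INR_fact_lt_0 n).
  assert (F1 : INR (Factorial.fact n) <= INR (Factorial.fact (S n))).
  { rewrite fact_simpl, mult_INR. rewrite S_INR. assert (0 <= INR n) by apply pos_INR. nra. }
  assert (Hp : 0 <= q ^ S n) by (apply pow_le; auto).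
  rewrite Rabs_right.
  2:{ apply Rle_ge. apply Rdiv_le_0_compat; auto. apply INR_fact_lt_0. }
  change (q ^ S n) with (q * q ^ n) at 1.
  unfold Rdiv. rewrite Rmult_assoc. apply Rmult_le_compat_l; auto.
  apply Rmult_le_compat_l; [apply pow_le; auto|].
  apply Rinv_le_contravar; auto.
Qed.

Lemma lin_ode_exists a11 a12 a21 a22 g1 g2 :
  (forall t, continuous a11 t) -> (forall t, continuous a12 t) ->
  (forall t, continuous a21 t) -> (forall t, continuous a22 t) ->
  (forall t, continuous g1 t) -> (forall t, continuous g2 t) ->
  exists x y : R -> R, x 0 = 0 /\ y 0 = 0 /\
    forall t, is_derive x t (a11 t * x t + a12 t * y t + g1 t) /\
              is_derive y t (a21 t * x t + a22 t * y t + g2 t).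
Proof.
  intros H1 H2 H3 H4 H5 H6.
  assert (PC := pic_cont _ _ _ _ _ _ H1 H2 H3 H4 H5 H6).
  set (X := fun n => fst (pic a11 a12 a21 a22 g1 g2 n)).
  set (Y := fun n => snd (pic a11 a12 a21 a22 g1 g2 n)).
  assert (PCf : forall m s, continuous (X m) s) by (intros; apply PC).
  assert (PCs : forall m s, continuous (Y m) s) by (intros; apply PC).
  exists (fun t => Series (fun n => X (S n) t - X n t)).
  exists (fun t => Series (fun n => Y (S n) t - Y n t)).
  split; [|split].
  - rewrite (Series_ext _ (fun n => 0 * 0)).
    + rewrite Series_scal_l; ring.
    + intros n. unfold X. rewrite (proj1 (pic_zero a11 a12 a21 a22 g1 g2 (S n))).
      rewrite (proj1 (pic_zero a11 a12 a21 a22 g1 g2 n)). ring.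
  - rewrite (Series_ext _ (fun n => 0 * 0)).
    + rewrite Series_scal_l; ring.
    + intros n. unfold Y. rewrite (proj2 (pic_zero a11 a12 a21 a22 g1 g2 (S n))).
      rewrite (proj2 (pic_zero a11 a12 a21 a22 g1 g2 n)). ring.
  - intros t.
    assert (HT : 0 < Rabs t + 1) by (assert (0 <= Rabs t) by apply Rabs_pos; lra).
    set (T := mkposreal _ HT).
    set (f := fun s => Rabs (a11 s) + Rabs (a12 s) + Rabs (a21 s) + Rabs (a22 s)
                       + Rabs (g1 s) + Rabs (g2 s)).
    assert (Hf : forall c, - T <= c <= T -> continuity_pt f c).
    { intros c _. apply pt_of_cont. unfold f.
      repeat apply cont_plus; apply continuous_Rabs_comp; auto. }
    destruct (continuity_ab_maj f (- T) T ltac:(simpl; lra) Hf) as [Mx [HMx _]].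
    set (B := f Mx).
    assert (HB : 0 <= B).
    { unfold B, f. assert (H0 := Rabs_pos (a11 Mx)). assert (H7 := Rabs_pos (a12 Mx)).
      assert (H8 := Rabs_pos (a21 Mx)). assert (H9 := Rabs_pos (a22 Mx)).
      assert (H10 := Rabs_pos (g1 Mx)). assert (H11 := Rabs_pos (g2 Mx)). lra. }
    assert (Hb : forall s, Rabs s <= T -> Rabs (a11 s) <= B /\ Rabs (a12 s) <= B /\ Rabs (a21 s) <= B /\
                           Rabs (a22 s) <= B /\ Rabs (g1 s) <= B /\ Rabs (g2 s) <= B).
    { intros s Hs. specialize (HMx s (abs_le_T _ _ Hs)). unfold B. unfold f in HMx |- *.
      assert (H0 := Rabs_pos (a11 s)). assert (H7 := Rabs_pos (a12 s)).
      assert (H8 := Rabs_pos (a21 s)). assert (H9 := Rabs_pos (a22 s)).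
      assert (H10 := Rabs_pos (g1 s)). assert (H11 := Rabs_pos (g2 s)).
      repeat split; lra. }
    assert (PB := pic_bound a11 a12 a21 a22 g1 g2 T B H1 H2 H3 H4 H5 H6 HB Hb).
    set (beta := fun n => (2 * B * T) ^ S n / INR (Factorial.fact (S n))).
    assert (Ebeta : ex_series beta).
    { apply exp_series_dom. apply Rmult_le_pos; [lra| simpl; lra]. }
    assert (Bnd : forall n y, Rabs y <= T ->
              Rabs (X (S n) y - X n y) + Rabs (Y (S n) y - Y n y) <= beta n).
    { intros n y Hy. eapply Rle_trans. apply (PB n y Hy). unfold beta.
      rewrite (Rpow_mult_distr (2 * B) T). unfold Rdiv. apply Rmult_le_compat_r.
      - left; apply Rinv_0_lt_compat, INR_fact_lt_0.
      - apply Rmult_le_compat_l; [apply pow_le; lra|].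
        apply pow_incr. split; [apply Rabs_pos| auto]. }
    assert (CX : CVU (fun n => X (S n)) (fun t => Series (fun n => X (S n) t - X n t)) 0 T).
    { apply cvu_gen with (beta := beta); [exact Ebeta| |intros; reflexivity].
      intros n y Hy. specialize (Bnd n y Hy). assert (H0 := Rabs_pos (Y (S n) y - Y n y)). lra. }
    assert (CY : CVU (fun n => Y (S n)) (fun t => Series (fun n => Y (S n) t - Y n t)) 0 T).
    { apply cvu_gen with (beta := beta); [exact Ebeta| |intros; reflexivity].
      intros n y Hy. specialize (Bnd n y Hy). assert (H0 := Rabs_pos (X (S n) y - X n y)). lra. }
    assert (Ht : Boule 0 T t) by (unfold Boule; simpl; rewrite Rminus_0_r; lra).
    assert (HbB : forall s, Boule 0 T s -> Rabs s <= T).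
    { intros s Hs. unfold Boule in Hs. rewrite Rminus_0_r in Hs. lra. }
    split; apply is_derive_Reals.
    + apply (comp_deriv X Y X (fun t => Series (fun n => X (S n) t - X n t)) (fun t => Series (fun n => Y (S n) t - Y n t)) (fun t => Series (fun n => X (S n) t - X n t)) a11 a12 g1 T B); auto.
      intros s Hs. destruct (Hb s (HbB s Hs)) as (?&?&?&?&?&?). auto.
    + apply (comp_deriv X Y Y (fun t => Series (fun n => X (S n) t - X n t)) (fun t => Series (fun n => Y (S n) t - Y n t)) (fun t => Series (fun n => Y (S n) t - Y n t)) a21 a22 g2 T B); auto.
      intros s Hs. destruct (Hb s (HbB s Hs)) as (?&?&?&?&?&?). auto.
Qed.

Definition Dn (a b DH DL L0 t : R) : R := Lt a b L0 t * DH * exp (- a * t) + DL * exp (- b * t).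
Definition Pn (a b DH L0 t : R) : R := Lt a b L0 t * DH * a * exp (- a * t).
Definition c11 a b DH DL L0 t := Pn a b DH L0 t / Dn a b DH DL L0 t.
Definition c12 a b DH DL L0 t := b * DL / Dn a b DH DL L0 t.
Definition gg a b c uL DH DL L0 t :=
  (b * (- uL) - c - Lt a b L0 t * c - Pn a b DH L0 t) / Dn a b DH DL L0 t.

Lemma Dn_pos a b DH DL L0 t : 0 < DH -> 0 < DL -> 0 < L0 -> 0 < Dn a b DH DL L0 t.
Proof.
  intros. unfold Dn, Lt.
  assert (0 < exp ((b - a) * t)) by apply exp_pos.
  assert (0 < exp (- a * t)) by apply exp_pos.
  assert (0 < exp (- b * t)) by apply exp_pos.
  apply Rplus_lt_0_compat; repeat apply Rmult_lt_0_compat; auto.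
Qed.

Lemma cont_c11 a b DH DL L0 t : 0 < DH -> 0 < DL -> 0 < L0 -> continuous (c11 a b DH DL L0) t.
Proof.
  intros. assert (H2 := Dn_pos a b DH DL L0 t H H0 H1).
  apply (ex_derive_continuous (K:=R_AbsRing) (V:=R_NormedModule)).
  unfold c11, Pn, Dn, Lt in *. auto_derive. lra.
Qed.
Lemma cont_c12 a b DH DL L0 t : 0 < DH -> 0 < DL -> 0 < L0 -> continuous (c12 a b DH DL L0) t.
Proof.
  intros. assert (H2 := Dn_pos a b DH DL L0 t H H0 H1).
  apply (ex_derive_continuous (K:=R_AbsRing) (V:=R_NormedModule)).
  unfold c12, Pn, Dn, Lt in *. auto_derive. lra.
Qed.
Lemma cont_gg a b c uL DH DL L0 t : 0 < DH -> 0 < DL -> 0 < L0 -> continuous (gg a b c uL DH DL L0) t.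
Proof.
  intros. assert (H2 := Dn_pos a b DH DL L0 t H H0 H1).
  apply (ex_derive_continuous (K:=R_AbsRing) (V:=R_NormedModule)).
  unfold gg, Pn, Dn, Lt in *. auto_derive. lra.
Qed.
Lemma cont_eb b t : continuous (fun s => exp (- b * s)) t.
Proof.
  apply (ex_derive_continuous (K:=R_AbsRing) (V:=R_NormedModule)). auto_derive. auto.
Qed.

Lemma rc_eps (f : R -> R) (l : R) : filterlim f (at_right 0) (locally l) ->
  forall eps, 0 < eps -> exists d : posreal, forall u, 0 < u < d -> Rabs (f u - l) < eps.
Proof.
  intros H eps He. apply filterlim_locally with (eps := mkposreal eps He) in H.
  destruct H as [d Hd]. exists d. intros u Hu. apply (Hd u).
  - unfold ball; simpl; unfold AbsRing_ball; simpl; unfold abs, minus, plus, opp; simpl.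
    rewrite Ropp_0, Rplus_0_r, Rabs_right; lra.
  - lra.
Qed.

Lemma c_eps (f : R -> R) (x : R) : continuous f x ->
  forall eps, 0 < eps -> exists d : posreal, forall u, Rabs (u - x) < d -> Rabs (f u - f x) < eps.
Proof.
  intros H eps He. apply filterlim_locally with (eps := mkposreal eps He) in H.
  destruct H as [d Hd]. exists d. intros u Hu. apply (Hd u). exact Hu.
Qed.

Lemma deriv_right (f : R -> R) (l : R) : is_derive f 0 l ->
  filterlim (fun h => (f h - f 0) / h) (at_right 0) (locally l).
Proof.
  intros H. apply is_derive_Reals in H.
  apply filterlim_locally. intros eps.
  destruct (H eps (cond_pos eps)) as [d Hd].
  exists d. intros u Hu Hu0.
  unfold ball in Hu; simpl in Hu; unfold AbsRing_ball in Hu; simpl in Hu;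
    unfold abs, minus, plus, opp in Hu; simpl in Hu. rewrite Ropp_0, Rplus_0_r in Hu.
  specialize (Hd u ltac:(lra) Hu). rewrite Rplus_0_l in Hd.
  unfold ball; simpl; unfold AbsRing_ball; simpl; unfold abs, minus, plus, opp; simpl. exact Hd.
Qed.

Lemma cont_right (f : R -> R) : continuous f 0 -> filterlim f (at_right 0) (locally (f 0)).
Proof.
  intros H P HP. specialize (H P HP). destruct H as [d Hd].
  exists d. intros y Hy _. apply Hd; auto.
Qed.

Lemma existence (a b c uL DH DL L0 : R) :
  0 < DH -> 0 < DL -> 0 < L0 ->
  exists rho drho, is_solution a b c uL DH DL L0 rho drho.
Proof.
  intros hDH hDL hL0.
  set (e := fun s => exp (- b * s)).
  assert (Ce : forall t, continuous e t) by (intros; apply cont_eb).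
  assert (C1 : forall t, continuous (c11 a b DH DL L0) t) by (intros; apply cont_c11; auto).
  assert (C2 : forall t, continuous (c12 a b DH DL L0) t) by (intros; apply cont_c12; auto).
  assert (C3 : forall t, continuous (gg a b c uL DH DL L0) t) by (intros; apply cont_gg; auto).
  destruct (lin_ode_exists (c11 a b DH DL L0) (c12 a b DH DL L0)
              (fun s => e s * c11 a b DH DL L0 s) (fun s => e s * c12 a b DH DL L0 s)
              (gg a b c uL DH DL L0) (fun s => e s * gg a b c uL DH DL L0 s))
    as (x & y & Hx0 & Hy0 & Hd); auto; try (intros; apply cont_mult; auto).
  set (dr := fun t => c11 a b DH DL L0 t * x t + c12 a b DH DL L0 t * y t + gg a b c uL DH DL L0 t).
  assert (Xc : forall t, continuous x t).
  { intros t. apply (ex_derive_continuous (K:=R_AbsRing) (V:=R_NormedModule)). eexists; apply (Hd t). }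
  assert (Yc : forall t, continuous y t).
  { intros t. apply (ex_derive_continuous (K:=R_AbsRing) (V:=R_NormedModule)). eexists; apply (Hd t). }
  assert (Dc : forall t, continuous dr t) by (intros; apply cont_lin; auto).
  assert (Dx : forall t, is_derive x t (dr t)) by (intros; apply Hd).
  assert (Dy : forall t, is_derive y t (e t * dr t)).
  { intros t. destruct (Hd t) as [_ H]. unfold dr.
    replace (e t * (c11 a b DH DL L0 t * x t + c12 a b DH DL L0 t * y t + gg a b c uL DH DL L0 t))
      with (e t * c11 a b DH DL L0 t * x t + e t * c12 a b DH DL L0 t * y t + e t * gg a b c uL DH DL L0 t)
      by ring. exact H. }
  exists x, dr. split; [|split].
  - split; [|split; [|split]].
    + intros; auto.
    + apply deriv_right; auto.
    + intros; auto.
    + apply cont_right; auto.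
  - exact Hx0.
  - intros t Ht.
    assert (HI : RInt (fun s => exp (- b * s) * dr s) 0 t = y t).
    { assert (E := is_RInt_derive (V:=R_CompleteNormedModule) y (fun s => e s * dr s) 0 t
                     (fun s _ => Dy s) (fun s _ => cont_mult _ _ _ (Ce s) (Dc s))).
      apply is_RInt_unique in E. unfold e in E. rewrite E.
      unfold minus, plus, opp; simpl. rewrite Hy0. ring. }
    unfold rhs. rewrite HI.
    assert (HD := Dn_pos a b DH DL L0 t hDH hDL hL0).
    unfold dr, c11, c12, gg, Pn. unfold Dn in *. field. lra.
Qed.

Lemma alg_bound (z J E p1 p2 A : R) :
  Rabs p1 <= A -> Rabs p2 <= A -> 0 <= E <= 1 ->
  2 * (z + E * J) * (p1 * z + p2 * J) <= 4 * A * (z ^ 2 + J ^ 2).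
Proof.
  intros H1 H2 HE.
  assert (HA : 0 <= A) by (assert (H := Rabs_pos p1); lra).
  assert (Hp := Rabs_pos z). assert (Hq := Rabs_pos J).
  assert (h1 : Rabs (z + E * J) <= Rabs z + Rabs J).
  { eapply Rle_trans. apply Rabs_triang. rewrite Rabs_mult.
    rewrite (Rabs_right E) by lra.
    assert (E * Rabs J <= Rabs J) by nra. lra. }
  assert (h2 : Rabs (p1 * z + p2 * J) <= A * (Rabs z + Rabs J)).
  { eapply Rle_trans. apply Rabs_triang. rewrite !Rabs_mult.
    assert (Rabs p1 * Rabs z <= A * Rabs z) by (apply Rmult_le_compat_r; auto).
    assert (Rabs p2 * Rabs J <= A * Rabs J) by (apply Rmult_le_compat_r; auto). lra. }
  assert (h3 : (z + E * J) * (p1 * z + p2 * J) <= (Rabs z + Rabs J) * (A * (Rabs z + Rabs J))).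
  { eapply Rle_trans. apply Rle_abs. rewrite Rabs_mult.
    apply Rmult_le_compat; auto using Rabs_pos. }
  assert (h4 : z ^ 2 = Rabs z ^ 2) by (rewrite RPow_abs; rewrite Rabs_right; [reflexivity| apply Rle_ge, pow2_ge_0]).
  assert (h5 : J ^ 2 = Rabs J ^ 2) by (rewrite RPow_abs; rewrite Rabs_right; [reflexivity| apply Rle_ge, pow2_ge_0]).
  rewrite h4, h5.
  assert (0 <= A * (Rabs z - Rabs J) ^ 2) by (apply Rmult_le_pos; auto; apply pow2_ge_0).
  nra.
Qed.

Lemma ext_cont (d : R -> R) :
  (forall t, 0 < t -> continuous d t) -> filterlim d (at_right 0) (locally (d 0)) ->
  forall s, continuous (fun u => d (Rmax u 0)) s.
Proof.
  intros Hc Hr s.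
  destruct (Rlt_or_le 0 s) as [Hs|Hs]; [|destruct (Rle_lt_or_eq_dec s 0 Hs) as [Hs'|Hs']].
  - apply continuous_ext_loc with (g := d).
    + exists (mkposreal s Hs). intros u Hu.
      unfold ball in Hu; simpl in Hu; unfold AbsRing_ball in Hu; simpl in Hu;
        unfold abs, minus, plus, opp in Hu; simpl in Hu.
      apply Rabs_def2 in Hu. rewrite Rmax_left by lra. reflexivity.
    + replace (d (Rmax s 0)) with (d s) by (rewrite Rmax_left by lra; reflexivity). auto.
  - apply continuous_ext_loc with (g := fun _ => d 0).
    + assert (Hs2 : 0 < - s) by lra.
      exists (mkposreal (- s) Hs2). intros u Hu.
      unfold ball in Hu; simpl in Hu; unfold AbsRing_ball in Hu; simpl in Hu;
        unfold abs, minus, plus, opp in Hu; simpl in Hu.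
      apply Rabs_def2 in Hu. rewrite Rmax_right by lra. reflexivity.
    + replace (d (Rmax s 0)) with (d 0) by (rewrite Rmax_right by lra; reflexivity).
      apply continuous_const.
  - subst s. apply filterlim_locally. intros eps.
    apply filterlim_locally with (eps := eps) in Hr. destruct Hr as [del Hd].
    exists del. intros u Hu. rewrite (Rmax_left 0 0) by lra.
    destruct (Rlt_or_le 0 u) as [Hu0|Hu0].
    + rewrite Rmax_left by lra. apply Hd; auto.
    + rewrite Rmax_right by lra. apply ball_center.
Qed.

Lemma rc_from_dq (f : R -> R) (l : R) :
  filterlim (fun h => (f h - f 0) / h) (at_right 0) (locally l) ->
  forall eps, 0 < eps -> exists d : posreal, forall u, 0 < u < d -> Rabs (f u - f 0) < eps.
Proof.
  intros H eps He.
  destruct (rc_eps _ _ H 1 Rlt_0_1) as [d1 Hd1].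
  assert (Hl : 0 < Rabs l + 1) by (assert (H0 := Rabs_pos l); lra).
  assert (Hd : 0 < Rmin d1 (eps / (Rabs l + 1))).
  { apply Rmin_pos. apply cond_pos. apply Rdiv_lt_0_compat; auto. }
  exists (mkposreal _ Hd). intros u Hu. simpl in Hu.
  assert (Hu1 : u < d1) by (eapply Rlt_le_trans; [apply Hu| apply Rmin_l]).
  assert (Hu2 : u < eps / (Rabs l + 1)) by (eapply Rlt_le_trans; [apply Hu| apply Rmin_r]).
  specialize (Hd1 u ltac:(lra)).
  replace (f u - f 0) with (u * ((f u - f 0) / u)) by (field; lra).
  rewrite Rabs_mult, (Rabs_right u) by lra.
  assert (Hq : Rabs ((f u - f 0) / u) < Rabs l + 1).
  { replace ((f u - f 0) / u) with (((f u - f 0) / u - l) + l) by ring.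
    eapply Rle_lt_trans. apply Rabs_triang. lra. }
  apply Rle_lt_trans with (u * (Rabs l + 1)).
  - apply Rmult_le_compat_l; lra.
  - apply Rmult_lt_reg_r with (/ (Rabs l + 1)). apply Rinv_0_lt_compat; auto.
    rewrite Rmult_assoc, Rinv_r by lra. rewrite Rmult_1_r. exact Hu2.
Qed.

Lemma uniqueness (a b c uL DH DL L0 : R) :
  0 < b -> 0 < DH -> 0 < DL -> 0 < L0 ->
  forall rho1 drho1 rho2 drho2,
     is_solution a b c uL DH DL L0 rho1 drho1 ->
     is_solution a b c uL DH DL L0 rho2 drho2 ->
     forall t, 0 <= t -> rho1 t = rho2 t.
Proof.
  intros hb hDH hDL hL0 r1 d1 r2 d2 [[D1 [Q1 [Cc1 RC1]]] [Z1 E1]] [[D2 [Q2 [Cc2 RC2]]] [Z2 E2]] t Ht.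
  destruct (Rle_lt_or_eq_dec 0 t Ht) as [Htp|Ht0]; [|subst t; rewrite Z1, Z2; reflexivity].
  set (e1 := fun s => exp (- b * s) * d1 (Rmax s 0)).
  set (e2 := fun s => exp (- b * s) * d2 (Rmax s 0)).
  assert (Ce1 : forall s, continuous e1 s).
  { intros s. apply cont_mult. apply cont_eb. apply ext_cont; auto. }
  assert (Ce2 : forall s, continuous e2 s).
  { intros s. apply cont_mult. apply cont_eb. apply ext_cont; auto. }
  set (J1 := fun u => RInt e1 0 u). set (J2 := fun u => RInt e2 0 u).
  assert (DJ1 : forall u, is_derive J1 u (e1 u)) by (intros; apply RInt_deriv; auto).
  assert (DJ2 : forall u, is_derive J2 u (e2 u)) by (intros; apply RInt_deriv; auto).
  assert (EJ1 : forall u, 0 <= u -> RInt (fun s => exp (- b * s) * d1 s) 0 u = J1 u).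
  { intros u Hu. unfold J1. apply RInt_ext. intros s Hs.
    rewrite Rmin_left, Rmax_right in Hs by lra. unfold e1. rewrite Rmax_left by lra. reflexivity. }
  assert (EJ2 : forall u, 0 <= u -> RInt (fun s => exp (- b * s) * d2 s) 0 u = J2 u).
  { intros u Hu. unfold J2. apply RInt_ext. intros s Hs.
    rewrite Rmin_left, Rmax_right in Hs by lra. unfold e2. rewrite Rmax_left by lra. reflexivity. }
  set (z := fun u => r1 u - r2 u). set (J := fun u => J1 u - J2 u).
  assert (Key : forall u, 0 <= u ->
    d1 u - d2 u = c11 a b DH DL L0 u * z u + c12 a b DH DL L0 u * J u).
  { intros u Hu. rewrite (E1 u Hu), (E2 u Hu). unfold rhs. rewrite (EJ1 u Hu), (EJ2 u Hu).
    assert (HD := Dn_pos a b DH DL L0 u hDH hDL hL0).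
    unfold z, J, c11, c12, Pn. unfold Dn in *. field. lra. }
  set (f := fun s => Rabs (c11 a b DH DL L0 s) + Rabs (c12 a b DH DL L0 s)).
  assert (Hf : forall s, 0 <= s <= t -> continuity_pt f s).
  { intros s _. apply pt_of_cont. unfold f. apply cont_plus; apply continuous_Rabs_comp.
    apply cont_c11; auto. apply cont_c12; auto. }
  destruct (continuity_ab_maj f 0 t Ht Hf) as [Mx [HMx _]].
  set (A := f Mx).
  assert (HA : 0 <= A).
  { unfold A, f. assert (H0 := Rabs_pos (c11 a b DH DL L0 Mx)).
    assert (H3 := Rabs_pos (c12 a b DH DL L0 Mx)). lra. }
  assert (Hb : forall s, 0 <= s <= t -> Rabs (c11 a b DH DL L0 s) <= A /\ Rabs (c12 a b DH DL L0 s) <= A).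
  { intros s Hs. specialize (HMx s Hs). unfold A, f in *.
    assert (H0 := Rabs_pos (c11 a b DH DL L0 s)).
    assert (H3 := Rabs_pos (c12 a b DH DL L0 s)). split; lra. }
  set (C := 4 * A).
  set (h := fun u => exp (- C * u) * (z u ^ 2 + J u ^ 2)).
  set (dh := fun u => exp (- C * u) * (2 * z u * (d1 u - d2 u) + 2 * J u * (e1 u - e2 u))
                      - C * exp (- C * u) * (z u ^ 2 + J u ^ 2)).
  assert (Dh : forall u, 0 < u -> is_derive h u (dh u)).
  { intros u Hu.
    assert (Hz : is_derive z u (d1 u - d2 u)).
    { apply (is_derive_minus (K:=R_AbsRing) (V:=R_NormedModule) r1 r2); auto. }
    assert (HJ : is_derive J u (e1 u - e2 u)).
    { apply (is_derive_minus (K:=R_AbsRing) (V:=R_NormedModule) J1 J2); auto. }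
    unfold h. auto_derive.
    - repeat split; eexists; eauto.
    - replace (Derive (fun x : R => z x) u) with (d1 u - d2 u) by (symmetry; apply is_derive_unique; exact Hz).
      replace (Derive (fun x : R => J x) u) with (e1 u - e2 u) by (symmetry; apply is_derive_unique; exact HJ).
      unfold dh. ring. }
  assert (Hneg : forall u, 0 < u <= t -> dh u <= 0).
  { intros u Hu. unfold dh.
    assert (He1 : e1 u - e2 u = exp (- b * u) * (d1 u - d2 u)).
    { unfold e1, e2. rewrite Rmax_left by lra. ring. }
    rewrite He1, (Key u ltac:(lra)).
    destruct (Hb u ltac:(lra)) as [Hb1 Hb2].
    assert (HE : 0 <= exp (- b * u) <= 1).
    { split. left; apply exp_pos. rewrite <- exp_0. left; apply exp_increasing; nra. }
    assert (AB := alg_bound (z u) (J u) (exp (- b * u)) _ _ A Hb1 Hb2 HE).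
    assert (Hc := exp_pos (- C * u)).
    assert (exp (- C * u) * (2 * (z u + exp (- b * u) * J u) *
              (c11 a b DH DL L0 u * z u + c12 a b DH DL L0 u * J u))
            <= exp (- C * u) * (C * (z u ^ 2 + J u ^ 2))).
    { apply Rmult_le_compat_l; [lra|]. unfold C. exact AB. }
    nra. }
  assert (HMVT : forall eps, 0 < eps < t -> h t <= h eps).
  { intros eps He.
    destruct (MVT_gen h eps t dh) as [c0 [Hc0 Heq]].
    - intros x Hx. rewrite Rmin_left, Rmax_right in Hx by lra. apply Dh; lra.
    - intros x Hx. rewrite Rmin_left, Rmax_right in Hx by lra. apply pt_of_cont.
      apply (ex_derive_continuous (K:=R_AbsRing) (V:=R_NormedModule)). eexists; apply Dh; lra.
    - rewrite Rmin_left, Rmax_right in Hc0 by lra.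
      assert (dh c0 <= 0) by (apply Hneg; lra).
      assert (dh c0 * (t - eps) <= 0) by (apply Rmult_le_0_r; lra). lra. }
  assert (HJ10 : J1 0 = 0) by (unfold J1; apply (RInt_point (V:=R_CompleteNormedModule))).
  assert (HJ20 : J2 0 = 0) by (unfold J2; apply (RInt_point (V:=R_CompleteNormedModule))).
  assert (Hlim : forall eta, 0 < eta -> exists del : posreal, forall u, 0 < u < del -> h u < eta).
  { intros eta Heta.
    set (m := Rmin 1 (eta / 4)).
    assert (Hm : 0 < m) by (apply Rmin_pos; lra).
    assert (Hm1 : m <= 1) by apply Rmin_l.
    assert (Hm2 : m <= eta / 4) by apply Rmin_r.
    destruct (rc_from_dq r1 (d1 0) Q1 (m / 2) ltac:(lra)) as [del1 H1].
    destruct (rc_from_dq r2 (d2 0) Q2 (m / 2) ltac:(lra)) as [del2 H2].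
    assert (CJ1 : continuous J1 0).
    { apply (ex_derive_continuous (K:=R_AbsRing) (V:=R_NormedModule)). eexists; apply DJ1. }
    assert (CJ2 : continuous J2 0).
    { apply (ex_derive_continuous (K:=R_AbsRing) (V:=R_NormedModule)). eexists; apply DJ2. }
    destruct (c_eps J1 0 CJ1 (m / 2) ltac:(lra)) as [del3 H3].
    destruct (c_eps J2 0 CJ2 (m / 2) ltac:(lra)) as [del4 H4].
    assert (Hdel : 0 < Rmin (Rmin del1 del2) (Rmin del3 del4)).
    { repeat apply Rmin_pos; apply cond_pos. }
    exists (mkposreal _ Hdel). intros u Hu. simpl in Hu.
    assert (Hu1 : u < del1 /\ u < del2 /\ u < del3 /\ u < del4).
    { destruct Hu as [_ Hu].
      assert (Rmin (Rmin del1 del2) (Rmin del3 del4) <= Rmin del1 del2) by apply Rmin_l.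
      assert (Rmin (Rmin del1 del2) (Rmin del3 del4) <= Rmin del3 del4) by apply Rmin_r.
      assert (Rmin del1 del2 <= del1) by apply Rmin_l.
      assert (Rmin del1 del2 <= del2) by apply Rmin_r.
      assert (Rmin del3 del4 <= del3) by apply Rmin_l.
      assert (Rmin del3 del4 <= del4) by apply Rmin_r. lra. }
    destruct Hu1 as (Hu1 & Hu2 & Hu3 & Hu4).
    specialize (H1 u ltac:(lra)). specialize (H2 u ltac:(lra)).
    specialize (H3 u ltac:(rewrite Rminus_0_r, Rabs_right; lra)).
    specialize (H4 u ltac:(rewrite Rminus_0_r, Rabs_right; lra)).
    rewrite Z1 in H1. rewrite Z2 in H2. rewrite HJ10 in H3. rewrite HJ20 in H4.
    rewrite Rminus_0_r in H1, H2, H3, H4.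
    assert (Hz : Rabs (z u) < m).
    { unfold z. eapply Rle_lt_trans. apply Rabs_triang. rewrite Rabs_Ropp. lra. }
    assert (HJ : Rabs (J u) < m).
    { unfold J. eapply Rle_lt_trans. apply Rabs_triang. rewrite Rabs_Ropp. lra. }
    assert (Hz2 : z u ^ 2 < m).
    { rewrite <- (pow2_abs (z u)). assert (0 <= Rabs (z u)) by apply Rabs_pos. nra. }
    assert (HJ2 : J u ^ 2 < m).
    { rewrite <- (pow2_abs (J u)). assert (0 <= Rabs (J u)) by apply Rabs_pos. nra. }
    unfold h.
    assert (HE : 0 < exp (- C * u) <= 1).
    { split. apply exp_pos. rewrite <- exp_0. apply exp_le_inv_compat_rule || idtac.
      destruct (Req_dec C 0) as [HC|HC].
      - rewrite HC. right. f_equal. ring.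
      - left. apply exp_increasing. unfold C in *. nra. }
    assert (0 <= z u ^ 2) by apply pow2_ge_0.
    assert (0 <= J u ^ 2) by apply pow2_ge_0.
    nra. }
  assert (Hht : h t <= 0).
  { destruct (Rle_or_lt (h t) 0) as [H|H]; auto.
    destruct (Hlim (h t) H) as [del Hdel].
    set (eps := Rmin (del / 2) (t / 2)).
    assert (He1 : 0 < eps) by (apply Rmin_pos; [assert (H0 := cond_pos del); lra| lra]).
    assert (He2 : eps <= del / 2) by apply Rmin_l.
    assert (He3 : eps <= t / 2) by apply Rmin_r.
    assert (H1 := HMVT eps ltac:(lra)).
    assert (H2 := Hdel eps ltac:(assert (H0 := cond_pos del); lra)). lra. }
  unfold h in Hht.
  assert (HE := exp_pos (- C * t)).
  assert (0 <= z t ^ 2) by apply pow2_ge_0.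
  assert (0 <= J t ^ 2) by apply pow2_ge_0.
  assert (Hzz : z t ^ 2 = 0) by nra.
  assert (Hz0 : z t = 0).
  { destruct (Req_dec (z t) 0) as [HH|HH]; auto.
    exfalso. apply HH. simpl in Hzz. rewrite Rmult_1_r in Hzz. destruct (Rmult_integral _ _ Hzz); auto. }
  unfold z in Hz0. lra.
Qed.

Theorem lemma4 (a b c uL DH DL L0 : R)
  (ha : 0 < a) (hab : a < b) (hc : 0 < c) (huL : uL < 0)
  (hDH : 0 < DH) (hDL : 0 < DL) (hL0 : 0 < L0) :
  (exists rho drho, is_solution a b c uL DH DL L0 rho drho) /\
  (forall rho1 drho1 rho2 drho2,
     is_solution a b c uL DH DL L0 rho1 drho1 ->
     is_solution a b c uL DH DL L0 rho2 drho2 ->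
     forall t, 0 <= t -> rho1 t = rho2 t).
Proof.
  split.
  - apply existence; auto.
  - apply uniqueness; auto. lra.
Qed.
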